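(* Let $E$ be a countable set and $\mathcal{C}=\langle E,X\rangle$ a stable configuration structure. Then for every finite configuration $x\in X$, the symmetric residual $x\odot\mathcal{C}$ is stable. Consequently, $\odot$ is a (partial) group action on stable configuration structures.
   Context: A configuration structure over $E$ is a pair $\mathcal{C}=\langle E,X\rangle$ with $X\subseteq\mathcal{P}(E)$ (its configurations). For finite $x\in X$, $x\odot\mathcal{C}:=\langle E,\{y\mathbin{\triangle}x\mid y\in X\}\rangle$, where $\mathbin{\triangle}$ is symmetric difference. $\mathcal{C}$ is stable if it is: rooted ($\emptyset\in X$); connected (for all $x\in X$ with $x\neq\emptyset$ there is $a\in x$ with $x\setminus\{a\}\in X$); closed under bounded union (for all $x,y,z\in X$, $x\cup y\subseteq z$ implies $x\cup y\in X$); closed under intersection (for all $x,y\in X$, $x\cap y\in X$); coherent (for all $x,y,z\in X$, if there are $z',z'',z'''\in X$ with $x\cup y\subseteq z'$, $y\cup z\subseteq z''$, $x\cup z\subseteq z'''$, then $x\cup y\cup z\in X$). *)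

(* Defs.v *)
From mathcomp Require Import all_boot.
From mathcomp Require Import boolp classical_sets cardinality.
Set Implicit Arguments. Unset Strict Implicit. Unset Printing Implicit Defensive.
Local Open Scope classical_set_scope.

(* A configuration structure <E, X> over the type E is represented by its
   set of configurations X : set (set E). *)

Definition symdiff (E : Type) (x y : set E) : set E := (x `\` y) `|` (y `\` x).

Definition residual (E : Type) (x : set E) (X : set (set E)) : set (set E) :=
  (fun y => symdiff y x) @` X.

Definition rooted (E : Type) (X : set (set E)) : Prop := X set0.

Definition connected_cs (E : Type) (X : set (set E)) : Prop :=
  forall x, X x -> x <> set0 -> exists2 a, x a & X (x `\ a).

Definition bounded_union_closed (E : Type) (X : set (set E)) : Prop :=
  forall x y z, X x -> X y -> X z -> x `|` y `<=` z -> X (x `|` y).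

Definition intersection_closed (E : Type) (X : set (set E)) : Prop :=
  forall x y, X x -> X y -> X (x `&` y).

Definition coherent (E : Type) (X : set (set E)) : Prop :=
  forall x y z, X x -> X y -> X z ->
    (exists2 z', X z' & x `|` y `<=` z') ->
    (exists2 z'', X z'' & y `|` z `<=` z'') ->
    (exists2 z''', X z''' & x `|` z `<=` z''') ->
    X (x `|` y `|` z).

Definition stable (E : Type) (X : set (set E)) : Prop :=
  [/\ rooted X, connected_cs X, bounded_union_closed X,
      intersection_closed X & coherent X].

(* Main.v *)
Require Import Defs.
From mathcomp Require Import all_boot.
From mathcomp Require Import boolp classical_sets cardinality.
Local Open Scope classical_set_scope.

Ltac atoms :=
  repeat match goal with
  | |- context [?A ?e] => is_var A; is_var e;
      lazymatch goal with
      | _ : A e |- _ => fail | _ : ~ A e |- _ => fail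
      | _ => destruct (pselect (A e)) end
  | |- context [?u = ?v] => is_var u; is_var v;
      lazymatch goal with
      | _ : u <> v |- _ => fail
      | _ => let H := fresh in destruct (pselect (u = v)) as [H|H]; [subst u|] end
  end.

Ltac pt := let e := fresh "e" in intros e;
  repeat match goal with H : (_ `<=` _) |- _ => move: (H e); clear H end;
  rewrite /symdiff /=; atoms; tauto.
Ltac seteq := apply/seteqP; split; pt.

Set Implicit Arguments.

Lemma Xeq {T : Type} (P : T -> Prop) a b : P a -> a = b -> P b.
Proof. by move=> h <-. Qed.

Lemma symdiffK (E : Type) (x y : set E) : symdiff (symdiff y x) x = y.
Proof. seteq. Qed.

Lemma resE (E : Type) (x : set E) (X : set (set E)) w :
  residual x X w <-> X (symdiff w x).
Proof.
split => [[y Xy <-]|h]; first by rewrite symdiffK.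
by exists (symdiff w x) => //; rewrite symdiffK.
Qed.

Lemma count_lt (T : eqType) (p q : pred T) (s : seq T) b :
  (forall e, q e -> p e) -> b \in s -> p b -> ~~ q b -> count q s < count p s.
Proof.
move=> hqp; elim: s => //= c s IH; rewrite inE => /orP [/eqP <-|bs] pb qb.
  by rewrite pb (negbTE qb) add0n add1n ltnS; exact: (sub_count hqp).
case qc: (q c); first by rewrite (hqp c qc) ltn_add2l; exact: IH.
rewrite add0n; apply: (leq_trans (IH bs pb qb)); exact: leq_addl.
Qed.

Definition mu {E : Type} (s : seq {classic E}) (z : set E) :=
  count (fun e => `[< z e >]) s.

Lemma mu_lt (E : Type) (s : seq {classic E}) (z : set E) (b : E) :
  z b -> b \in s -> mu s (z `\ b) < mu s z.
Proof.
move=> zb bs; apply: (@count_lt _ _ _ s b) => //.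
- by move=> e /asboolP [ze _]; apply/asboolP.
- by apply/asboolP.
- by apply/asboolPn => -[_ /=]; apply.
Qed.

Lemma caseA (E : Type) (X : set (set E)) (x : set E) (s : seq {classic E}) :
  stable X -> X x -> (forall e, x e -> e \in s) ->
  forall n y, mu s y <= n -> X y -> (exists e, y e /\ ~ x e) ->
  exists a, [/\ y a, ~ x a & X (y `\ a)].
Proof.
move=> [r0 conn bu ic coh] Xx xs n.
elim: n => [|n IH] y muy Xy [e [ye nxe]];
  (have yne : y <> set0 by move=> y0; rewrite y0 in ye);
  have [b yb Xyb] := conn y Xy yne;
  (have [xb|nxb] := pselect (x b); last by exists b);
  have lt := @mu_lt _ s _ _ yb (xs b xb).
  by move: (leq_trans lt muy).
have muy' : mu s (y `\ b) <= n by rewrite -ltnS (leq_trans lt muy).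
have ex' : exists e, (y `\ b) e /\ ~ x e.
  exists e; split => //; split => // eb; apply: nxe; by rewrite eb.
have [a [[ya anb] nxa Xa]] := IH _ muy' Xyb ex'.
exists a; split => //.
have Xxy := ic _ _ Xx Xy.
apply: (@Xeq _ X _ _ (bu _ _ _ Xa Xxy Xy _)); [pt|seteq].
Qed.

Lemma caseB (E : Type) (X : set (set E)) (x : set E) (s : seq {classic E}) :
  stable X -> (forall e, x e -> e \in s) ->
  forall n z y, mu s z <= n -> X z -> z `<=` x -> X y -> y `<=` z ->
  (exists e, z e /\ ~ y e) ->
  exists a, [/\ z a, ~ y a & X (y `|` [set a])].
Proof.
move=> [r0 conn bu ic coh] xs n.
elim: n => [|n IH] z y muz Xz zx Xy yz [e [ze nye]];
  (have zne : z <> set0 by move=> z0; rewrite z0 in ze);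
  have [b zb Xzb] := conn z Xz zne;
  have lt := @mu_lt _ s _ _ zb (xs b (zx b zb)).
  by move: (leq_trans lt muz).
have muz' : mu s (z `\ b) <= n by rewrite -ltnS (leq_trans lt muz).
have zbx : z `\ b `<=` x by pt.
have [yb|nyb] := pselect (y b).
  have Xy' : X (y `\ b).
    apply: (@Xeq _ X _ _ (ic _ _ Xy Xzb)); seteq.
  have yzb : y `\ b `<=` z `\ b by pt.
  have ex' : exists e, (z `\ b) e /\ ~ (y `\ b) e.
    exists e; split; first (split => // eb; apply: nye; by rewrite eb).
    by case.
  have [a [[za anb] nya Xa]] := IH (z `\ b) (y `\ b) muz' Xzb zbx Xy' yzb ex'.
  exists a; split => //; first by move=> ya; apply: nya.
  apply: (@Xeq _ X _ _ (bu _ _ _ Xy Xa Xz _)); first by pt.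
  seteq.
have [[e' [ze' nye']]|none] := pselect (exists e, (z `\ b) e /\ ~ y e).
  have yzb : y `<=` z `\ b by pt.
  have [a [[za anb] nya Xa]] := IH (z `\ b) y muz' Xzb zbx Xy yzb (ex_intro _ e' (conj ze' nye')).
  by exists a.
exists b; split => //.
have nn : forall e, z e -> e <> b -> y e.
  move=> e1 ze1 neb; apply: contrapT => nye1; apply: none; exists e1; split => //.
apply: (@Xeq _ X _ _ Xz); apply/seteqP; split => e1; have := nn e1; have := yz e1;
  rewrite /=; atoms; tauto.
Qed.


Lemma BU' (E : Type) (X : set (set E)) (x w1 w2 w3 : set E) :
  stable X -> X (symdiff w1 x) -> X (symdiff w2 x) -> X (symdiff w3 x) ->
  w1 `|` w2 `<=` w3 -> X (symdiff (w1 `|` w2) x).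
Proof.
move=> [r0 conn bu ic coh] h1 h2 h3 sub.
have := coh _ _ _ (ic _ _ h1 h2) (ic _ _ h1 h3) (ic _ _ h2 h3).
move=> /(_ (ex_intro2 _ _ _ h1 _) (ex_intro2 _ _ _ h3 _) (ex_intro2 _ _ _ h2 _)) H.
apply: (@Xeq _ X _ _ (H _ _ _)); try pt.
seteq.
Qed.

Lemma INT' (E : Type) (X : set (set E)) (x w1 w2 : set E) :
  stable X -> X x -> X (symdiff w1 x) -> X (symdiff w2 x) ->
  X (symdiff (w1 `&` w2) x).
Proof.
move=> [r0 conn bu ic coh] Xx h1 h2.
have := coh _ _ _ (ic _ _ h1 h2) (ic _ _ h1 Xx) (ic _ _ h2 Xx).
move=> /(_ (ex_intro2 _ _ _ h1 _) (ex_intro2 _ _ _ Xx _) (ex_intro2 _ _ _ h2 _)) H.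
apply: (@Xeq _ X _ _ (H _ _ _)); try pt.
seteq.
Qed.

Lemma COH' (E : Type) (X : set (set E)) (x w1 w2 w3 w12 w23 w13 : set E) :
  stable X -> X (symdiff w1 x) -> X (symdiff w2 x) -> X (symdiff w3 x) ->
  X (symdiff w12 x) -> w1 `|` w2 `<=` w12 ->
  X (symdiff w23 x) -> w2 `|` w3 `<=` w23 ->
  X (symdiff w13 x) -> w1 `|` w3 `<=` w13 ->
  X (symdiff (w1 `|` w2 `|` w3) x).
Proof.
move=> hs h1 h2 h3 h12 s12 h23 s23 h13 s13.
have Xv12 := @BU' _ _ _ _ _ _ hs h1 h2 h12 s12.
have Xv23 := @BU' _ _ _ _ _ _ hs h2 h3 h23 s23.
have Xv13 := @BU' _ _ _ _ _ _ hs h1 h3 h13 s13.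
case: hs => r0 conn bu ic coh.
have Xr1 := ic _ _ (ic _ _ h1 Xv12) Xv13.
have Xr2 := ic _ _ (ic _ _ h2 Xv12) Xv23.
have Xr3 := ic _ _ (ic _ _ h3 Xv13) Xv23.
clear s12 s23 s13.
have := coh _ _ _ Xr1 Xr2 Xr3.
move=> /(_ (ex_intro2 _ _ _ Xv12 _) (ex_intro2 _ _ _ Xv23 _) (ex_intro2 _ _ _ Xv13 _)) H.
apply: (@Xeq _ X _ _ (H _ _ _)); try pt.
seteq.
Qed.

Lemma CONN' (E : Type) (X : set (set E)) (x : set E) (s : seq {classic E}) :
  stable X -> X x -> (forall e, x e -> e \in s) ->
  forall w, X (symdiff w x) -> w <> set0 ->
  exists a, w a /\ X (symdiff (w `\ a) x).
Proof.
move=> hs Xx xs w Xw wne.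
have [[e [ye nxe]]|nA] := pselect (exists e, symdiff w x e /\ ~ x e).
  have [a [ya nxa Xa]] := @caseA _ _ _ _ hs Xx xs _ _ (leqnn _) Xw (ex_intro _ e (conj ye nxe)).
  exists a; split.
    by move: ya; rewrite /symdiff /=; tauto.
  apply: (@Xeq _ X _ _ Xa); seteq.
have yx : symdiff w x `<=` x.
  move=> e ye; apply: contrapT => nxe; apply: nA; exists e; by split.
have [e0 we0] : exists e, w e.
  apply: contrapT => h; apply: wne; apply/seteqP; split => [e1 we1|e1 []].
  by apply: h; exists e1.
have [xe0|nxe0] := pselect (x e0); last first.
  exfalso; apply: nA; exists e0; split => //; rewrite /symdiff /=; tauto.
have ex' : exists e, x e /\ ~ symdiff w x e.
  exists e0; split => //; rewrite /symdiff /=; tauto.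
have xx : x `<=` x by [].
have [a [xa nya Xa]] := @caseB _ _ _ _ hs xs _ _ _ (leqnn _) Xx xx Xw yx ex'.
exists a; split.
  by move: nya; rewrite /symdiff /=; atoms; tauto.
apply: (@Xeq _ X _ _ Xa); clear yx xx; seteq.
Qed.

Unset Implicit Arguments.

Theorem mainTheorem5 (E : Type) (X : set (set E)) :
  countable [set: E] -> stable X ->
  (forall x : set E, finite_set x -> X x -> stable (residual x X)) /\
  (* partial group action of (finite subsets of E, symmetric difference) *)
  residual set0 X = X /\
  (forall x y : set E, finite_set x -> X x -> finite_set y ->
     residual x X y ->
     residual y (residual x X) = residual (symdiff x y) X).
Proof.
move=> _ hs; split; last split.
- move=> x fx Xx.
  have [s xs] := (@finite_seqP {classic E} x).1 fx.
  have xin : forall e, x e -> e \in s by move=> e; rewrite xs.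
  split.
  + rewrite /rooted; apply/resE.
    by apply: (@Xeq _ X _ _ Xx); seteq.
  + move=> w /resE Xw wne.
    have [a [wa Xa]] := @CONN' _ _ _ _ hs Xx xin _ Xw wne.
    by exists a => //; apply/resE.
  + move=> w1 w2 w3 /resE h1 /resE h2 /resE h3 sub; apply/resE.
    exact: @BU' _ _ _ _ _ _ hs h1 h2 h3 sub.
  + move=> w1 w2 /resE h1 /resE h2; apply/resE.
    exact: @INT' _ _ _ _ _ hs Xx h1 h2.
  + move=> w1 w2 w3 /resE h1 /resE h2 /resE h3 [w12 /resE h12 s12]
      [w23 /resE h23 s23] [w13 /resE h13 s13]; apply/resE.
    exact: @COH' _ _ _ _ _ _ _ _ _ hs h1 h2 h3 h12 s12 h23 s23 h13 s13.
- apply/seteqP; split => w h.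
    move/resE: h => h.
    by apply: (@Xeq _ X _ _ h); seteq.
  by apply/resE; apply: (@Xeq _ X _ _ h); seteq.
- move=> x y _ _ _ _; apply/seteqP; split => w h.
    move/resE/resE: h => h; apply/resE.
    by apply: (@Xeq _ X _ _ h); seteq.
  move/resE: h => h; apply/resE; apply/resE.
  by apply: (@Xeq _ X _ _ h); seteq.
Qed.
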